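(* Let $K$ and $K'$ be two non-degenerate CMIs, with $\mathrm{can}(\mathrm{pur}(K))=(C,\langle\mathbb I_K,\mathbb I_K,P_i,1\le i\le t\rangle)$. Let $K''=R_K^{K'}$ and $\mathrm{can}(\mathrm{pur}(K''))=(C'',\langle\mathbb I_{K''},\mathbb I_{K''},P''_j,1\le j\le r\rangle)$. If $K$ implies $K'$ and $R_K^{K'}\ne(\cdot,\langle\ \rangle)$, then for any $m_1\in P''_{j_1}$ and $m_2\in P''_{j_2}$ with $1\le j_1,j_2\le r$, $j_1\ne j_2$, we have $m_1\in P_{i_1}$ and $m_2\in P_{i_2}$ for some $1\le i_1,i_2\le t$ with $i_1\ne i_2$.
   Context: Setting: $X_1,\dots,X_n$ jointly distributed discrete random variables with $H(X_i)<\infty$; distribution unspecified. $X_\alpha=(X_i,i\in\alpha)$, $X_\emptyset$ constant. A CMI is $K=(C,\langle Q_1,\dots,Q_k\rangle)$, $k\ge0$, $C\subseteq\{1,\dots,n\}$, $\langle\cdot\rangle$ an unordered multiset of subsets; valid (for a given distribution) if $\sum_iH(X_{Q_i}|X_C)-H(X_{Q_1},\dots,X_{Q_k}|X_C)=0$. Empty members may be deleted. Degenerate = valid for every distribution, written $(\cdot,\langle\ \rangle)$. ''$K$ implies $K'$'': for every joint distribution, if $K$ is valid then $K'$ is valid. $\mathrm{pur}(K)=(C,\langle Q_i\setminus C:Q_i\setminus C\ne\emptyset\rangle)$. For pure $K$: $\mathbb I_K$ = indices lying in at least two members of the collection if $k\ge2$, else $\emptyset$; $P_1,\dots,P_t$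 the nonempty sets among $Q_i\setminus\mathbb I_K$; $\mathrm{can}(K)=(\cdot,\langle\ \rangle)$ if $k\le1$, $(C,\langle\mathbb I_K,\mathbb I_K\rangle)$ if $k\ge2,\mathbb I_K\ne\emptyset,t\le1$, $(C,\langle P_1..P_t\rangle)$ if $k\ge2,\mathbb I_K=\emptyset$, $(C,\langle\mathbb I_K,\mathbb I_K,P_1..P_t\rangle)$ if $k\ge2,\mathbb I_K\ne\emptyset,t\ge2$. For general $K$, $\mathbb I_K$ is the repeated-index set of $\mathrm{pur}(K)$; general-form notation omits the copies of $\mathbb I_K$ when empty and uses $t=0$ for $(C,\langle\mathbb I_K,\mathbb I_K\rangle)$. $R_K^{K'}$: with $\mathrm{can}(\mathrm{pur}(K'))=(C',\langle\mathbb I_{K'},\mathbb I_{K'},P'_j,1\le j\le s\rangle)$, $D=\mathbb I_{K'}\setminus\mathbb I_K$ and $T_1,\dots,T_u$ the nonempty sets among $P'_j\setminus\mathbb I_K$: $R_K^{K'}=(\cdot,\langle\ \rangle)$ if $D=\emptyset,u\le1$; $(C'\setminus\mathbb I_K,\langle T_1..T_u\rangle)$ if $D=\emptyset,u\ge2$; $(C'\setminus\mathbb I_K,\langle D,D\rangle)$ if $D\ne\emptyset,u\le1$; $(C'\setminus\mathbb I_K,\langle D,D,T_1..T_u\rangle)$ if $D\ne\emptyset,u\ge2$. *)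

(* Defs.v *)
From HB Require Import structures.
From mathcomp Require Import all_classical all_reals all_analysis.
From mathcomp Require Import all_boot all_order all_algebra.
Set Implicit Arguments. Unset Strict Implicit. Unset Printing Implicit Defensive.
Import Order.TTheory GRing.Theory Num.Theory.
Local Open Scope ring_scope.


(* A CMI on indices 'I_n : (C, <Q_1,...,Q_k>); the multiset is a sequence,
   all operations below are invariant under permutation of it. *)
Definition CMI (n : nat) := ({set 'I_n} * seq {set 'I_n})%type.

Definition dotCMI (n : nat) : CMI n := (set0, [::]).

Definition pur n (K : CMI n) : CMI n :=
  (K.1, [seq S <- [seq Q :\: K.1 | Q <- K.2] | S != set0]).

Definition rep n (Qs : seq {set 'I_n}) : {set 'I_n} :=
  if (2 <= size Qs)%N then [set i : 'I_n | (2 <= count (fun Q : {set 'I_n} => i \in Q) Qs)%N]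
  else set0.

Definition Iset n (K : CMI n) : {set 'I_n} := rep (pur K).2.

Definition parts n (I : {set 'I_n}) (Qs : seq {set 'I_n}) : seq {set 'I_n} :=
  [seq S <- [seq Q :\: I | Q <- Qs] | S != set0].

(* can(K) for a pure K *)
Definition can n (K : CMI n) : CMI n :=
  let I := rep K.2 in
  let Ps := parts I K.2 in
  if (size K.2 <= 1)%N then dotCMI n
  else if I == set0 then (K.1, Ps)
  else if (size Ps <= 1)%N then (K.1, [:: I; I])
  else (K.1, I :: I :: Ps).

(* The sets P_1..P_t in the general-form notation
   can(pur(K)) = (C, <I_K, I_K, P_i, 1 <= i <= t>)
   (copies of I_K omitted when I_K is empty; t = 0 for (C,<I_K,I_K>)). *)
Definition canP n (K : CMI n) : seq {set 'I_n} :=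
  let Kc := can (pur K) in
  if Iset K == set0 then Kc.2 else drop 2 Kc.2.

Definition Rcmi n (K K' : CMI n) : CMI n :=
  let C' := (can (pur K')).1 in
  let IK := Iset K in
  let D := Iset K' :\: IK in
  let Ts := [seq S <- [seq P :\: IK | P <- canP K'] | S != set0] in
  let u := size Ts in
  if D == set0 then
    (if (u <= 1)%N then dotCMI n else (C' :\: IK, Ts))
  else if (u <= 1)%N then (C' :\: IK, [:: D; D])
  else (C' :\: IK, D :: D :: Ts).

(* An outcome of (X_1,...,X_n): each X_i takes values in a countable alphabet,
   w.l.o.g. nat. *)
Definition outcome (n : nat) := {ffun 'I_n -> nat}.

(* X_A = (X_i, i in A), encoded by zeroing the coordinates outside A;
   X_set0 is constant. *)
Definition proj n (A : {set 'I_n}) (x : outcome n) : outcome n :=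
  [ffun i => if i \in A then x i else 0%N].

Section Entropy.
Variable R : realType.
Variable n : nat.

Definition is_pmf (p : outcome n -> R) : Prop :=
  (forall x, 0 <= p x) /\ (\esum_(x in @classical_sets.setT (outcome n)) (p x)%:E = 1%E).

Definition marg (p : outcome n -> R) (A : {set 'I_n}) (y : outcome n) : R :=
  fine (\esum_(x in (fun x : outcome n => proj A x = y)) (p x)%:E).

(* Shannon entropy H(X_A) (natural log; ln 0 = 0), possibly +oo *)
Definition entE (p : outcome n -> R) (A : {set 'I_n}) : \bar R :=
  \esum_(y in @classical_sets.setT (outcome n)) (- (marg p A y * ln (marg p A y)))%:E.

Definition admissible (p : outcome n -> R) : Prop :=
  is_pmf p /\ forall i : 'I_n, (entE p [set i] < +oo)%E.

Definition ent (p : outcome n -> R) (A : {set 'I_n}) : R := fine (entE p A).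

Definition condEnt (p : outcome n -> R) (A C : {set 'I_n}) : R :=
  ent p (A :|: C) - ent p C.

Definition valid (p : outcome n -> R) (K : CMI n) : Prop :=
  \sum_(Q <- K.2) condEnt p Q K.1
    - condEnt p (\bigcup_(Q <- K.2) Q) K.1 = 0.

Definition degenerateCMI (K : CMI n) : Prop :=
  forall p, admissible p -> valid p K.

Definition impliesCMI (K K' : CMI n) : Prop :=
  forall p, admissible p -> valid p K -> valid p K'.

End Entropy.

(* Main.v *)
Require Import Defs.
From mathcomp Require Import all_classical all_reals all_analysis.
From mathcomp Require Import all_boot all_order all_algebra.
From mathcomp Require Import zify lra.
Set Implicit Arguments. Unset Strict Implicit. Unset Printing Implicit Defensive.
Import Order.TTheory GRing.Theory Num.Theory.
Section Comb.
Variable n : nat.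
Implicit Types (X : CMI n) (L : seq {set 'I_n}).

Lemma cfm (a : pred {set 'I_n}) (A : {set 'I_n}) L :
  (forall S, a (S :\: A) -> a S) ->
  (count a [seq S <- [seq Q :\: A | Q <- L] | S != set0] <= count a L)%N.
Proof.
move=> H; rewrite count_filter count_map; apply: sub_count => S /=.
by case/andP => /H.
Qed.

Lemma cfm_eq (a : pred {set 'I_n}) (A : {set 'I_n}) L :
  (forall S, a (S :\: A) = a S) -> (forall S, a S -> S != set0) ->
  count a [seq S <- [seq Q :\: A | Q <- L] | S != set0] = count a L.
Proof.
move=> H1 H2; rewrite count_filter count_map; apply: eq_count => S /=.
rewrite H1; case E: (a S) => //=; by rewrite -H1 in E; rewrite H2.
Qed.

Lemma canP_cases X : canP X = [::] \/ canP X = parts (Iset X) (pur X).2.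
Proof.
rewrite /canP /can /Iset.
have [E|NE] := eqVneq (rep (pur X).2) set0.
  case: ifP => _ /=; first by left.
  by rewrite E; right.
case: ifP => _ /=; first by left.
case: ifP => _ /=; first by left.
by right; rewrite drop0.
Qed.

Lemma canP_parts X : (2 <= size (parts (Iset X) (pur X).2))%N ->
  canP X = parts (Iset X) (pur X).2.
Proof.
move=> h.
have hs : (2 <= size (pur X).2)%N.
  apply: leq_trans h _; rewrite /parts size_filter; apply: leq_trans (count_size _ _) _; by rewrite size_map.
move: h hs; rewrite /canP /can /Iset => h hs.
rewrite leqNgt hs /=.
have [E|NE] := eqVneq (rep (pur X).2) set0 => //=.
by rewrite leqNgt h /= drop0.
Qed.

Lemma canP_mem X S (x : 'I_n) : S \in canP X -> x \in S ->
  x \notin X.1 /\ x \notin Iset X.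
Proof.
case: (canP_cases X) => ->; first by [].
rewrite /parts mem_filter => /andP[_ /mapP[Q]].
rewrite /pur mem_filter => /andP[_ /mapP[Q0 _ ->]] -> .
by rewrite !inE => /andP[-> /andP[-> _]].
Qed.

Lemma count_canP X (a : pred {set 'I_n}) :
  (forall S A, a (S :\: A) -> a S) -> (count a (canP X) <= count a X.2)%N.
Proof.
move=> H; case: (canP_cases X) => ->; first by [].
rewrite /parts /pur /=.
have h1 := @cfm a (Iset X) (pur X).2 (fun S => H S (Iset X)). have h2 := @cfm a X.1 X.2 (fun S => H S X.1). exact: leq_trans h1 h2.
Qed.

Lemma count2 (T : eqType) (a : pred T) x0 (s : seq T) j1 j2 :
  (j1 < size s)%N -> (j2 < size s)%N -> j1 <> j2 ->
  a (nth x0 s j1) -> a (nth x0 s j2) -> (2 <= count a s)%N.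
Proof.
wlog lt12 : j1 j2 / (j1 < j2)%N.
  move=> W h1 h2 ne a1 a2; case: (ltngtP j1 j2) => c.
  - exact: (W j1 j2 c h1 h2 ne a1 a2).
  - exact: (W j2 j1 c h2 h1 (fun e => ne (esym e)) a2 a1).
  - by case: ne.
move=> h1 h2 _ a1 a2.
rewrite -(cat_take_drop j2 s) count_cat.
have c1 : (0 < count a (take j2 s))%N.
  rewrite -has_count; apply/hasP; exists (nth x0 s j1) => //.
  rewrite -(nth_take x0 lt12); apply: mem_nth; rewrite size_take.
  by case: ifP.
have c2 : (0 < count a (drop j2 s))%N.
  rewrite -has_count; apply/hasP; exists (nth x0 s j2) => //.
  rewrite -[j2 in nth _ _ j2]addn0 -nth_drop; apply: mem_nth.
  by rewrite size_drop subn_gt0.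
by rewrite (leq_add c1 c2).
Qed.

Lemma rep_count (x : 'I_n) L :
  x \notin rep L -> (count (fun Q : {set 'I_n} => x \in Q) L <= 1)%N.
Proof.
rewrite /rep; case: ifP => h.
  by rewrite inE -ltnNge ltnS.
move=> _; apply: leq_trans (count_size _ _) _.
by move: h => /negbT; rewrite -ltnNge ltnS.
Qed.


Definition meets (m1 m2 : 'I_n) : pred {set 'I_n} :=
  fun S => (m1 \in S) || (m2 \in S).
Definition inS (m : 'I_n) : pred {set 'I_n} := fun S => m \in S.

Lemma inS_ne m S : inS m S -> S != set0.
Proof. by move=> h; apply/set0Pn; exists m. Qed.

Lemma meets_ne m1 m2 S : meets m1 m2 S -> S != set0.
Proof. by case/orP => h; apply/set0Pn; [exists m1|exists m2]. Qed.

Lemma count_pur_eq m X : m \notin X.1 ->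
  count (inS m) (pur X).2 = count (inS m) X.2.
Proof.
move=> h; apply: cfm_eq; last exact: inS_ne.
by move=> S; rewrite /inS in_setD (negbTE h).
Qed.

Lemma count_pur_eq2 m1 m2 X : m1 \notin X.1 -> m2 \notin X.1 ->
  count (meets m1 m2) (pur X).2 = count (meets m1 m2) X.2.
Proof.
move=> h1 h2; apply: cfm_eq; last exact: meets_ne.
by move=> S; rewrite /meets !in_setD (negbTE h1) (negbTE h2).
Qed.

Lemma rep_count' (x : 'I_n) L :
  x \notin rep L -> (count (inS x) L <= 1)%N.
Proof. exact: rep_count. Qed.

Lemma cnt1 m X : m \notin X.1 -> m \notin Iset X -> (count (inS m) X.2 <= 1)%N.
Proof. by move=> h1 h2; rewrite -count_pur_eq //; apply: rep_count'. Qed.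


Lemma meets_mono m1 m2 S A : meets m1 m2 (S :\: A) -> meets m1 m2 S.
Proof. by rewrite /meets !in_setD => /orP[/andP[_ ->]|/andP[_ ->]] //; rewrite orbT. Qed.
Lemma inS_mono m S A : inS m (S :\: A) -> inS m S.
Proof. by rewrite /inS in_setD => /andP[]. Qed.

Section RS.
Variables K K' : CMI n.
Definition TsK := [seq S <- [seq P :\: Iset K | P <- canP K'] | S != set0].
Definition DK := Iset K' :\: Iset K.

Lemma Rcmi_shape : (Rcmi K K').2 = [::] \/ (Rcmi K K').2 = TsK \/
  (DK != set0 /\ ((Rcmi K K').2 = [:: DK; DK] \/ (Rcmi K K').2 = DK :: DK :: TsK)).
Proof.
rewrite /Rcmi -/TsK -/DK.
have [E|NE] := eqVneq DK set0.
  case: ifP => _; [by left | by right; left].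
case: ifP => _; right; right; split => //; [left|right]; done.
Qed.


Lemma R_side (j1 j2 : nat) (m1 m2 : 'I_n) :
    (j1 < size (canP (Rcmi K K')))%N -> (j2 < size (canP (Rcmi K K')))%N ->
    j1 <> j2 ->
    m1 \in nth set0 (canP (Rcmi K K')) j1 ->
    m2 \in nth set0 (canP (Rcmi K K')) j2 ->
  [/\ m1 \notin Iset K, m2 \notin Iset K, m1 \notin K'.1, m2 \notin K'.1
     & (2 <= count (meets m1 m2) K'.2)%N].
Proof.
set R := Rcmi K K' => h1 h2 ne i1 i2.
have [n1R n1I] := canP_mem (mem_nth set0 h1) i1.
have [n2R n2I] := canP_mem (mem_nth set0 h2) i2.
have c1 := cnt1 n1R n1I.
have c2 := cnt1 n2R n2I.
have cm : (2 <= count (meets m1 m2) R.2)%N.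
  apply: (leq_trans _ (count_canP _ (@meets_mono m1 m2))).
  by apply: (@count2 _ (meets m1 m2) set0 _ _ _ h1 h2 ne); rewrite /meets ?i1 ?i2 ?orbT.
have ca1 : (1 <= count (inS m1) R.2)%N.
  apply: (leq_trans _ (count_canP _ (@inS_mono m1))).
  by rewrite -has_count; apply/hasP; exists (nth set0 (canP R) j1) => //; apply: mem_nth.
have ca2 : (1 <= count (inS m2) R.2)%N.
  apply: (leq_trans _ (count_canP _ (@inS_mono m2))).
  by rewrite -has_count; apply/hasP; exists (nth set0 (canP R) j2) => //; apply: mem_nth.
have [cT cT1 cT2] : [/\ (2 <= count (meets m1 m2) TsK)%N, (1 <= count (inS m1) TsK)%N
     & (1 <= count (inS m2) TsK)%N].
  case: Rcmi_shape cm ca1 ca2 c1 c2 => [->|[->|[_ [E|E]]]] //; rewrite -/R E /=.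
    case h1D: (m1 \in DK); first by rewrite /inS h1D.
    case h2D: (m2 \in DK); first by rewrite /inS h2D.
    by rewrite /meets h1D h2D.
  case h1D: (m1 \in DK); first by rewrite /inS h1D.
  case h2D: (m2 \in DK); first by rewrite /inS h2D.
  by rewrite /meets /inS h1D h2D /= !add0n => -> -> ->.
have fromT m : (1 <= count (inS m) TsK)%N -> m \notin Iset K /\ m \notin K'.1.
  rewrite -has_count => /hasP[S]; rewrite /TsK mem_filter => /andP[_ /mapP[P PK ->]].
  rewrite /inS in_setD => /andP[-> mP]; split => //.
  by case: (canP_mem PK mP).
have [a1 b1] := fromT _ cT1.
have [a2 b2] := fromT _ cT2.
split => //.
apply: (leq_trans cT); apply: (leq_trans _ (count_canP _ (@meets_mono m1 m2))).
by apply: cfm => S; apply: meets_mono.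
Qed.

End RS.


Lemma K_side (K : CMI n) (m1 m2 : 'I_n) :
  m1 \notin K.1 -> m2 \notin K.1 -> m1 \notin Iset K -> m2 \notin Iset K ->
  (2 <= count (meets m1 m2) K.2)%N ->
  exists i1 i2 : nat,
      [/\ (i1 < size (canP K))%N, (i2 < size (canP K))%N, i1 <> i2,
          m1 \in nth set0 (canP K) i1 & m2 \in nth set0 (canP K) i2].
Proof.
move=> a1 a2 b1 b2 cm.
have e1 : count (inS m1) (parts (Iset K) (pur K).2) = count (inS m1) K.2.
  rewrite /parts cfm_eq ?count_pur_eq //; last exact: inS_ne.
  by move=> S; rewrite /inS in_setD (negbTE b1).
have e2 : count (inS m2) (parts (Iset K) (pur K).2) = count (inS m2) K.2.
  rewrite /parts cfm_eq ?count_pur_eq //; last exact: inS_ne.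
  by move=> S; rewrite /inS in_setD (negbTE b2).
have em : count (meets m1 m2) (parts (Iset K) (pur K).2) = count (meets m1 m2) K.2.
  rewrite /parts cfm_eq ?count_pur_eq2 //; last exact: meets_ne.
  by move=> S; rewrite /meets !in_setD (negbTE b1) (negbTE b2).
have c1 := cnt1 a1 b1.
have c2 := cnt1 a2 b2.
have EP : canP K = parts (Iset K) (pur K).2.
  apply: canP_parts; apply: leq_trans (count_size (meets m1 m2) _).
  by rewrite em.
rewrite EP; set Ps := parts _ _ in e1 e2 em *.
have UI : (count (meets m1 m2) Ps + count (predI (inS m1) (inS m2)) Ps =
   count (inS m1) Ps + count (inS m2) Ps)%N := count_predUI (inS m1) (inS m2) Ps.
rewrite em e1 e2 in UI.
have both0 : count (predI (inS m1) (inS m2)) Ps = 0%N.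
  move: UI cm c1 c2; set x := count _ K.2; set y := count _ K.2; set z := count _ K.2.
  set w := count _ Ps; lia.
have p1 : has (inS m1) Ps.
  rewrite has_count e1; move: UI cm c1 c2; set x := count _ K.2; set y := count _ K.2.
  set z := count _ K.2; set w := count _ Ps; lia.
have p2 : has (inS m2) Ps.
  rewrite has_count e2; move: UI cm c1 c2; set x := count _ K.2; set y := count _ K.2.
  set z := count _ K.2; set w := count _ Ps; lia.
case/hasP: p1 => S1 S1P S1m; case/hasP: p2 => S2 S2P S2m.
exists (index S1 Ps), (index S2 Ps); rewrite !index_mem !nth_index //; split => // eq.
have : has (predI (inS m1) (inS m2)) Ps.
  apply/hasP; exists S1 => //; apply/andP; split => //.
  by rewrite (_ : S1 = S2) // -(nth_index set0 S1P) -(nth_index set0 S2P) eq.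
by rewrite has_count both0.
Qed.

End Comb.




Local Open Scope ring_scope.

Section Esum.
Variables (R : realType) (T : choiceType).

Lemma esum_pt (S : classical_sets.set T) (a : T) (c : \bar R) : (0 <= c)%E ->
  \esum_(x in S) (if x == a then c else 0%E) = if a \in S then c else 0%E.
Proof.
move=> c0; rewrite (esumID [set a]); last by move=> x _; case: eqP.
rewrite [X in (_ + X)%E]esum1; last first.
  by move=> x [_ /= xa]; case: eqP.
rewrite adde0 classical_sets.setIC classical_sets.set1I.
case: ifP => _; last by rewrite esum_set0.
by rewrite esum_set1 ?eqxx.
Qed.

Lemma esum_two (S : classical_sets.set T) (a b : T) (c d : \bar R) :
  a != b -> (0 <= c)%E -> (0 <= d)%E ->
  \esum_(x in S) ((if x == a then c else 0%E) + (if x == b then d else 0%E))%E =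
  ((if a \in S then c else 0%E) + (if b \in S then d else 0%E))%E.
Proof.
move=> ab c0 d0; rewrite esumD; first by rewrite !esum_pt.
  by move=> x _; case: eqP.
by move=> x _; case: eqP.
Qed.
End Esum.

Section Dist.
Variables (R : realType) (n : nat) (m1 m2 : 'I_n).

Definition meets' (S : {set 'I_n}) : bool := (m1 \in S) || (m2 \in S).

Definition fb (b : nat) : outcome n :=
  [ffun i => if (i == m1) || (i == m2) then b else 0%N].

Definition pd (x : outcome n) : R :=
  (if x == fb 0 then 2^-1 else 0) + (if x == fb 1 then 2^-1 else 0).

Lemma fb01 : fb 0 != fb 1.
Proof. by apply/eqP => /ffunP /(_ m1); rewrite !ffunE eqxx. Qed.

Lemma proj_fb (A : {set 'I_n}) : (Defs.proj A (fb 0) == Defs.proj A (fb 1)) = ~~ meets' A.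
Proof.
apply/eqP/idP.
  move/ffunP => h; apply/negP => /orP[] hm.
    by move: (h m1); rewrite !ffunE hm eqxx.
  by move: (h m2); rewrite !ffunE hm eqxx orbT.
move=> h; apply/ffunP => i; rewrite !ffunE.
case: ifP => // iA; case: ifP => // /orP[] /eqP ei; subst i;
  by move: h; rewrite /meets' iA ?orbT.
Qed.

Lemma pdE x : (pd x)%:E = ((if x == fb 0 then (2^-1)%:E else 0) + (if x == fb 1 then (2^-1)%:E else 0))%E.
Proof. by rewrite /pd EFinD; case: eqP; case: eqP. Qed.

Lemma half_ge0 : (0 <= ((2:R)^-1)%:E)%E.
Proof. by rewrite lee_fin invr_ge0. Qed.

Lemma marg_pd (A : {set 'I_n}) y : marg pd A y =
  (if Defs.proj A (fb 0) == y then 2^-1 else 0) + (if Defs.proj A (fb 1) == y then 2^-1 else 0).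
Proof.
rewrite /marg (eq_esum (fun x _ => pdE x)) esum_two ?fb01 ?half_ge0 //.
have h b : (fb b \in ((fun x => Defs.proj A x = y) : classical_sets.set (outcome n))) = (Defs.proj A (fb b) == y).
  by apply/idP/eqP => [/set_mem|/mem_set].
by rewrite !h; case: eqP; case: eqP.
Qed.

Definition hh (A : {set 'I_n}) : R := if meets' A then ln 2 else 0.

Lemma entE_pd (A : {set 'I_n}) : entE pd A = (hh A)%:E.
Proof.
rewrite /entE /hh.
set a := Defs.proj A (fb 0); set b := Defs.proj A (fb 1).
have ab := proj_fb A; rewrite -/a -/b in ab.
case: (boolP (meets' A)) => hm; last first.
  rewrite esum1 // => y _; rewrite marg_pd -/a -/b.
  move: ab; rewrite hm => /eqP <-.
  case: eqP => _; last by rewrite addr0 mul0r oppr0.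
  by rewrite -mulr2n -[_ *+ 2]mulr_natl divff // ln1 mulr0 oppr0.
have {}ab : a != b by rewrite ab hm.
set c : R := - (2^-1 * ln 2^-1).
have c0 : (0 <= c%:E)%E.
  rewrite lee_fin /c lnV ?posrE // mulrN opprK mulr_ge0 // ?invr_ge0 //.
  by apply: ltW; rewrite ln_gt0 // ltr1n.
rewrite (@eq_esum _ _ _ _ (fun y => ((if y == a then c%:E else 0) + (if y == b then c%:E else 0))%E)); last first.
  move=> y _; rewrite marg_pd -/a -/b.
  case: (eqVneq y a) => [->|ya].
    by rewrite [b == a]eq_sym (negbTE ab) addr0 adde0.
  rewrite [b == y]eq_sym; case: (eqVneq y b) => [_|yb]; first by rewrite add0r add0e.
  by rewrite addr0 mul0r oppr0 adde0.
rewrite esum_two // !ifT; try by apply: mem_set.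
rewrite -EFinD /c lnV ?posrE //; congr (_%:E); lra.
Qed.

Lemma adm_pd : admissible pd.
Proof.
split; last by move=> i; rewrite entE_pd ltry.
split.
  by move=> x; rewrite /pd addr_ge0 //; case: eqP => _ //; rewrite invr_ge0.
rewrite (eq_esum (fun x _ => pdE x)) esum_two ?fb01 ?half_ge0 //.
rewrite !ifT; try by apply: mem_set.
by rewrite -EFinD; congr (_%:E); lra.
Qed.

Lemma ent_pd (A : {set 'I_n}) : ent pd A = hh A.
Proof. by rewrite /ent entE_pd. Qed.

Lemma meetsU (A B : {set 'I_n}) : meets' (A :|: B) = meets' A || meets' B.
Proof. by rewrite /meets' !in_setU orbACA. Qed.

Lemma meets_big (L : seq {set 'I_n}) : meets' (\bigcup_(Q <- L) Q) = has meets' L.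
Proof.
elim: L => [|Q L IH]; first by rewrite big_nil /meets' !in_set0.
by rewrite big_cons meetsU IH.
Qed.

Lemma sum_hh (L : seq {set 'I_n}) : \sum_(Q <- L) hh Q = (count meets' L)%:R * ln 2.
Proof.
elim: L => [|Q L IH]; first by rewrite big_nil mul0r.
rewrite big_cons IH /= natrD mulrDl /hh; case: (meets' Q) => /=; by rewrite ?mul1r ?mul0r ?add0r.
Qed.

Lemma valid_pd (K : CMI n) : valid pd K <->
  (meets' K.1 \/ (count meets' K.2 <= 1)%N).
Proof.
rewrite /valid /condEnt.
rewrite (eq_bigr (fun Q => hh (Q :|: K.1) - hh K.1)); last by move=> Q _; rewrite !ent_pd.
rewrite !ent_pd.
case: (boolP (meets' K.1)) => hC.
  rewrite big1 ?/hh ?meetsU ?hC ?orbT ?subrr ?sub0r ?oppr0; first by split => // _; left.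
  by move=> Q _; rewrite /hh meetsU hC orbT subrr.
have hC0 : hh K.1 = 0 by rewrite /hh (negbTE hC).
under eq_bigr => Q _ do rewrite hC0 subr0 /hh meetsU (negbTE hC) orbF -/(hh Q).
rewrite sum_hh hC0 subr0 /hh meetsU (negbTE hC) orbF meets_big.
have l2 : (0 < ln (2:R)) by rewrite ln_gt0 // ltr1n.
split.
  move=> h; right; move: h; case: (boolP (has meets' K.2)) => hh1.
    rewrite -{2}(mul1r (ln 2)) -mulrBl => /eqP; rewrite mulf_eq0 (gt_eqF l2) orbF.
    rewrite subr_eq0 (eqr_nat R _ 1) => /eqP ->; done.
  by rewrite has_count -leqNgt in hh1; rewrite (leq_trans hh1).
case => // c1; case: (boolP (has meets' K.2)) => hh1.
  have : count meets' K.2 = 1%N by apply/eqP; rewrite eqn_leq c1 -has_count.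
  by move=> ->; rewrite mul1r subrr.
by rewrite has_count -leqNgt leqn0 in hh1; rewrite (eqP hh1) mul0r subrr.
Qed.
End Dist.


Theorem mainTheorem10 (R : realType) (n : nat) (K K' : CMI n) :
  ~ degenerateCMI R K -> ~ degenerateCMI R K' ->
  impliesCMI R K K' ->
  Rcmi K K' <> dotCMI n ->
  forall (j1 j2 : nat) (m1 m2 : 'I_n),
    (j1 < size (canP (Rcmi K K')))%N -> (j2 < size (canP (Rcmi K K')))%N ->
    j1 <> j2 ->
    m1 \in nth set0 (canP (Rcmi K K')) j1 ->
    m2 \in nth set0 (canP (Rcmi K K')) j2 ->
    exists i1 i2 : nat,
      [/\ (i1 < size (canP K))%N, (i2 < size (canP K))%N, i1 <> i2,
          m1 \in nth set0 (canP K) i1 & m2 \in nth set0 (canP K) i2].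
Proof.
move=> _ _ imp _ j1 j2 m1 m2 h1 h2 ne i1 i2.
have [b1 b2 a1 a2 cm] := R_side h1 h2 ne i1 i2.
have nv' : ~ valid (pd R m1 m2) K'.
  rewrite valid_pd => -[|].
    by rewrite /meets' (negbTE a1) (negbTE a2).
  have -> : count (meets' m1 m2) K'.2 = count (meets m1 m2) K'.2 by [].
  by move=> h; have := leq_trans cm h.
have nv : ~ valid (pd R m1 m2) K.
  by move=> v; apply: nv'; apply: imp => //; apply: adm_pd.
have [c1 c2 c3] : [/\ m1 \notin K.1, m2 \notin K.1 & (2 <= count (meets m1 m2) K.2)%N].
  move: nv; rewrite valid_pd /meets'.
  case: (boolP (m1 \in K.1)) => x1; first by case; left.
  case: (boolP (m2 \in K.1)) => x2; first by case; left; rewrite orbT.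
  case: (ltnP 1 (count (meets m1 m2) K.2)) => // h; by case; right.
exact: K_side.
Qed.
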